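(* Let $\alpha\in\mathbb{Q}(i)\setminus\mathbb{R}$ with $|\alpha|>1$, with minimal primitive polynomial $P_\alpha(X)=a_2X^2+a_1X+a_0$ ($a_0,a_1,a_2\in\mathbb{Z}$ coprime, $a_2>0$, $P_\alpha(\alpha)=0$), $\mathcal{D}=\{0,\ldots,|a_0|-1\}$ and $\Lambda_\alpha=\mathbb{Z}[\alpha]\cap\alpha^{-1}\mathbb{Z}[\alpha^{-1}]$. If $N\in\Lambda_\alpha\setminus\{0\}$ has an integer $\alpha$-expansion $N=\sum_{j=0}^k d_j\alpha^j$ ($d_j\in\mathcal{D}$, $d_k\ne0$), then $$k=\log_{|\alpha|}(|N|)+\mathcal{O}(1),$$ where the implied constant depends only on $\alpha$.
   Context: For $x\in\Lambda_\alpha$ there is a unique $d\in\mathcal{D}$ with $(x-d)/\alpha\in\Lambda_\alpha$, and $T_\alpha(x)=(x-d)/\alpha$. For $N=N_0\in\Lambda_\alpha$ let $N_{j+1}=T_\alpha(N_j)$ and $d_j$ be defined by $N_j=\alpha N_{j+1}+d_j$; if $k$ is minimal with $N_{k+1}=0$, then $N=\sum_{j=0}^k d_j\alpha^j$ is the integer $\alpha$-expansion of $N$. *)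

(* Defs.v *)
From Stdlib Require Import Reals ZArith.
From Coquelicot Require Import Coquelicot.
Open Scope R_scope.

Fixpoint Cpown (x : C) (n : nat) : C :=
  match n with O => RtoC 1 | S m => Cmult x (Cpown x m) end.

Fixpoint csum (f : nat -> C) (n : nat) : C :=
  match n with O => RtoC 0 | S m => Cplus (csum f m) (f m) end.

Definition is_rational (x : R) : Prop :=
  exists p q : Z, (q <> 0)%Z /\ x = IZR p / IZR q.

Definition in_Qi (a : C) : Prop := is_rational (fst a) /\ is_rational (snd a).

Definition in_Z_alpha (a x : C) : Prop :=
  exists (n : nat) (c : nat -> Z), x = csum (fun j => Cmult (RtoC (IZR (c j))) (Cpown a j)) n.

Definition in_invZ_invalpha (a x : C) : Prop :=
  exists (n : nat) (c : nat -> Z),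
    x = csum (fun j => Cmult (RtoC (IZR (c j))) (Cpown (Cinv a) (S j))) n.

Definition in_Lambda (a x : C) : Prop := in_Z_alpha a x /\ in_invZ_invalpha a x.

Definition exp_tail (a : C) (k : nat) (d : nat -> nat) (j : nat) : C :=
  csum (fun i => Cmult (RtoC (INR (d (j + i)%nat))) (Cpown a i)) (S k - j).

(* The integer alpha-expansion of N with digit set D = {0,...,|a0|-1}:
   digits d_0..d_k in D, d_k <> 0, and the sequence N_j = sum_{i=j}^k d_i alpha^(i-j)
   satisfies N_0 = N and N_j in Lambda_alpha for all j <= k+1. Since N_j = alpha N_{j+1} + d_j,
   and the digit d with (x-d)/alpha in Lambda_alpha is unique, this says exactly
   N_{j+1} = T_alpha(N_j), N_{k+1} = 0, with k minimal (as N_k = d_k <> 0). *)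
Definition is_int_alpha_expansion (a : C) (a0 : Z) (N : C) (k : nat) (d : nat -> nat) : Prop :=
  (forall j, (j <= k)%nat -> (d j < Z.abs_nat a0)%nat) /\
  d k <> 0%nat /\
  N = exp_tail a k d 0 /\
  (forall j, (j <= S k)%nat -> in_Lambda a (exp_tail a k d j)).

(* Main.v *)
Require Import Defs.
From Stdlib Require Import Reals ZArith.
From Coquelicot Require Import Coquelicot.
From Stdlib Require Import Lia Lra Znumtheory List ClassicalEpsilon.
Open Scope R_scope.

Lemma csum_ext f g n : (forall j, (j < n)%nat -> f j = g j) -> csum f n = csum g n.
Proof. induction n; simpl; intros H; auto. rewrite IHn by (intros; apply H; lia). rewrite H by lia. auto. Qed.

Lemma csum_plus f g n : csum (fun j => Cplus (f j) (g j)) n = Cplus (csum f n) (csum g n).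
Proof. induction n; simpl. ring. rewrite IHn. ring. Qed.

Lemma csum_scal c f n : csum (fun j => Cmult c (f j)) n = Cmult c (csum f n).
Proof. induction n; simpl. ring. rewrite IHn. ring. Qed.

Lemma csum_front f n : csum f (S n) = Cplus (f 0%nat) (csum (fun j => f (S j)) n).
Proof. induction n. simpl. ring. change (csum f (S (S n))) with (Cplus (csum f (S n)) (f (S n))).
rewrite IHn. simpl. ring. Qed.

Lemma csum_pad f n m : (forall j, (n <= j)%nat -> f j = RtoC 0) -> csum f (m + n) = csum f n.
Proof. intros H. induction m; simpl; auto. rewrite IHm, H by lia. ring. Qed.

Lemma Cpown_S a n : Cpown a (S n) = Cmult a (Cpown a n).
Proof. reflexivity. Qed.


Definition sh (q : nat -> Z) (k : nat) : Z := match k with O => 0%Z | S k' => q k' end.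
Definition fmul (a0 a1 a2 : Z) (q : nat -> Z) (k : nat) : Z :=
  (a0 * q k + a1 * sh q k + a2 * sh (sh q) k)%Z.

Lemma prime_step a0 a1 a2 p q : prime p -> ~ ((p | a0) /\ (p | a1) /\ (p | a2))%Z ->
  (forall k, (p | fmul a0 a1 a2 q k)%Z) -> forall j, (p | q j)%Z.
Proof.
  intros Hp Hn H j. induction j as [j IH] using lt_wf_ind.
  destruct (Zdivide_dec p a0) as [d0|d0].
  2:{ specialize (H j). unfold fmul in H.
      assert (A : (p | a1 * sh q j + a2 * sh (sh q) j)%Z).
      { destruct j as [|j']; simpl. exists 0%Z; ring.
        apply Z.divide_add_r; apply Z.divide_mul_r. apply IH; lia.
        destruct j' as [|j'']; simpl. exists 0%Z; ring. apply IH; lia. }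
      assert (H' : (p | (a1 * sh q j + a2 * sh (sh q) j) + a0 * q j)%Z).
      { replace ((a1 * sh q j + a2 * sh (sh q) j) + a0 * q j)%Z with (a0 * q j + a1 * sh q j + a2 * sh (sh q) j)%Z by ring. auto. }
      pose proof (Z.divide_add_cancel_r _ _ _ A H') as B.
      destruct (prime_mult _ Hp _ _ B); tauto. }
  destruct (Zdivide_dec p a1) as [d1|d1].
  2:{ specialize (H (S j)). unfold fmul in H. simpl in H.
      assert (A : (p | a0 * q (S j) + a2 * sh q j)%Z).
      { apply Z.divide_add_r. apply Z.divide_mul_l; auto. apply Z.divide_mul_r.
        destruct j as [|j']; simpl. exists 0%Z; ring. apply IH; lia. }
      assert (H' : (p | (a0 * q (S j) + a2 * sh q j) + a1 * q j)%Z).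
      { replace ((a0 * q (S j) + a2 * sh q j) + a1 * q j)%Z with (a0 * q (S j) + a1 * q j + a2 * sh q j)%Z by ring. auto. }
      pose proof (Z.divide_add_cancel_r _ _ _ A H') as B.
      destruct (prime_mult _ Hp _ _ B); tauto. }
  destruct (Zdivide_dec p a2) as [d2|d2]. { exfalso; tauto. }
  specialize (H (S (S j))). unfold fmul in H. simpl in H.
  assert (A : (p | a0 * q (S (S j)) + a1 * q (S j))%Z).
  { apply Z.divide_add_r; apply Z.divide_mul_l; auto. }
  pose proof (Z.divide_add_cancel_r _ _ _ A H) as B.
  destruct (prime_mult _ Hp _ _ B); tauto.
Qed.

Lemma prime_divisor_ex : forall n M, (1 < M)%Z -> (Z.to_nat M <= n)%nat -> exists p, prime p /\ (p | M)%Z.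
Proof.
  induction n; intros M H1 H2. lia.
  destruct (prime_dec M) as [P|P]. exists M; split; auto. apply Z.divide_refl.
  destruct (not_prime_divide M H1 P) as [d [Hd Hdm]].
  destruct (IHn d) as [p [Hp Hpd]]; try lia.
  exists p; split; auto. eapply Z.divide_trans; eauto.
Qed.

Lemma fmul_scal a0 a1 a2 c q k : fmul a0 a1 a2 (fun i => (c * q i)%Z) k = (c * fmul a0 a1 a2 q k)%Z.
Proof. unfold fmul, sh. destruct k as [|[|k]]; ring. Qed.

Lemma fmul_ext a0 a1 a2 q1 q2 k : (forall i, q1 i = q2 i) -> fmul a0 a1 a2 q1 k = fmul a0 a1 a2 q2 k.
Proof. intros H. unfold fmul, sh. destruct k as [|[|k]]; rewrite ?H; ring. Qed.

Lemma content_lemma a0 a1 a2 : ~ (exists p, prime p /\ (p | a0) /\ (p | a1) /\ (p | a2))%Z ->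
  forall n M q, (0 < M)%Z -> (Z.to_nat M <= n)%nat ->
  (forall k, (M | fmul a0 a1 a2 q k)%Z) -> forall k, (M | q k)%Z.
Proof.
  intros Hprim. induction n; intros M q H0 Hn H k. lia.
  destruct (Z.eq_dec M 1) as [E|E]. subst. apply Z.divide_1_l.
  destruct (prime_divisor_ex (S n) M) as [p [Hp [M' HM']]]; try lia.
  assert (Hp1 : (1 < p)%Z) by (destruct Hp; auto).
  assert (Hq : forall j, (p | q j)%Z).
  { apply (prime_step a0 a1 a2); auto.
    - intros [A [B C]]. apply Hprim. exists p; auto.
    - intros j. eapply Z.divide_trans. 2: apply H. exists M'. lia. }
  set (q' := fun j => (q j / p)%Z).
  assert (Eq : forall j, q j = (p * q' j)%Z).
  { intros j. unfold q'. destruct (Hq j) as [t Ht]. rewrite Ht. rewrite Z.div_mul by lia. ring. }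
  assert (HM'pos : (0 < M')%Z) by nia.
  assert (IH' : forall j, (M' | q' j)%Z).
  { apply IHn; auto. nia. intros j.
    apply (Z.mul_divide_cancel_l _ _ p). lia.
    rewrite <- fmul_scal. rewrite (fmul_ext _ _ _ _ q). replace (p * M')%Z with M by lia. apply H.
    intros i; rewrite Eq; auto. }
  rewrite Eq, HM'. rewrite Z.mul_comm. apply Z.mul_divide_mono_l. auto.
Qed.

Definition mono (s i : nat) : Z := if Nat.eqb i s then 1%Z else 0%Z.

Lemma fmul_add a0 a1 a2 q1 q2 k : fmul a0 a1 a2 (fun i => (q1 i + q2 i)%Z) k = (fmul a0 a1 a2 q1 k + fmul a0 a1 a2 q2 k)%Z.
Proof. unfold fmul, sh. destruct k as [|[|k]]; ring. Qed.

Lemma fmul_supp a0 a1 a2 q s : (forall i, (s <= i)%nat -> q i = 0%Z) -> forall k, (S (S s) <= k)%nat -> fmul a0 a1 a2 q k = 0%Z.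
Proof. intros H k Hk. unfold fmul, sh. destruct k as [|[|k]]; try lia. rewrite !H by lia. ring. Qed.

Lemma fmul_mono_top a0 a1 a2 s : fmul a0 a1 a2 (mono s) (S (S s)) = a2.
Proof. unfold fmul, sh, mono. rewrite Nat.eqb_refl.
  destruct (Nat.eqb_spec (S (S s)) s); try lia. destruct (Nat.eqb_spec (S s) s); try lia; ring. Qed.

Lemma pdiv a0 a1 a2 : (0 < a2)%Z -> forall n g, (forall k, (n <= k)%nat -> g k = 0%Z) ->
  exists M q r0 r1, (0 < M)%Z /\ (forall k, (n <= k)%nat -> q k = 0%Z) /\
   forall k, (M * g k = fmul a0 a1 a2 q k + (if Nat.eqb k 0 then r0 else 0) + (if Nat.eqb k 1 then r1 else 0))%Z.
Proof.
  intros Ha2. induction n; intros g Hg.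
  - exists 1%Z, (fun _ => 0%Z), 0%Z, 0%Z. split. lia. split. auto.
    intros k. rewrite Hg by lia. unfold fmul, sh. destruct k as [|[|k]]; cbn [Nat.eqb]; ring.
  - destruct (le_lt_dec n 1) as [Hn|Hn].
    + exists 1%Z, (fun _ => 0%Z), (g 0%nat), (g 1%nat). split. lia. split. auto.
      intros k. unfold fmul, sh. destruct k as [|[|k]]; cbn [Nat.eqb]; try ring. rewrite (Hg (S (S k))) by lia. ring.
    + destruct n as [|[|n]]; try lia.
      set (c := g (S (S n))).
      set (g' := fun k => (a2 * g k - c * fmul a0 a1 a2 (mono n) k)%Z).
      destruct (IHn g') as [M [q [r0 [r1 [HM [Hq HE]]]]]].
      { intros k Hk. unfold g'. destruct (Nat.eq_dec k (S (S n))).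
        - subst k. rewrite fmul_mono_top. unfold c. ring.
        - rewrite Hg by lia. rewrite (fmul_supp _ _ _ _ (S n)). ring.
          intros i Hi. unfold mono. destruct (Nat.eqb_spec i n); auto; lia. lia. }
      exists (a2 * M)%Z, (fun i => (q i + (M * c) * mono n i)%Z), r0, r1.
      split. nia. split.
      { intros k Hk. rewrite Hq by lia. unfold mono. destruct (Nat.eqb_spec k n); lia. }
      intros k. rewrite fmul_add, fmul_scal. specialize (HE k). unfold g' in HE.
      replace (a2 * M * g k)%Z with (M * (a2 * g k - c * fmul a0 a1 a2 (mono n) k) + M * c * fmul a0 a1 a2 (mono n) k)%Z by ring.
      rewrite HE. ring.
Qed.


Definition ev (a : C) (q : nat -> Z) (n : nat) : C :=
  csum (fun j => Cmult (RtoC (IZR (q j))) (Cpown a j)) n.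

Lemma ev_ext a q1 q2 n : (forall j, q1 j = q2 j) -> ev a q1 n = ev a q2 n.
Proof. intros H. unfold ev. apply csum_ext. intros j _. rewrite H. auto. Qed.

Lemma ev_add a q1 q2 n : ev a (fun k => (q1 k + q2 k)%Z) n = Cplus (ev a q1 n) (ev a q2 n).
Proof. unfold ev. rewrite <- csum_plus. apply csum_ext. intros j _. rewrite plus_IZR, RtoC_plus. ring. Qed.

Lemma ev_scal a x q n : ev a (fun k => (x * q k)%Z) n = Cmult (RtoC (IZR x)) (ev a q n).
Proof. unfold ev. rewrite <- csum_scal. apply csum_ext. intros j _. rewrite mult_IZR, RtoC_mult. ring. Qed.

Lemma ev_pad a q n m : (forall k, (n <= k)%nat -> q k = 0%Z) -> ev a q (m + n) = ev a q n.
Proof. intros H. unfold ev. apply csum_pad. intros j Hj. rewrite H by auto. simpl. ring. Qed.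

Lemma ev_sh a q n : ev a (sh q) (S n) = Cmult a (ev a q n).
Proof. unfold ev. rewrite csum_front. simpl sh. rewrite <- csum_scal.
  replace (Cmult (RtoC (IZR 0)) (Cpown a 0)) with (RtoC 0) by (simpl; ring).
  rewrite Cplus_0_l. apply csum_ext. intros j _. simpl. ring. Qed.

Lemma ev_fmul a a0 a1 a2 q s : (forall k, (s <= k)%nat -> q k = 0%Z) ->
  ev a (fmul a0 a1 a2 q) (S (S s)) =
  Cmult (Cplus (Cplus (Cmult (RtoC (IZR a2)) (Cmult a a)) (Cmult (RtoC (IZR a1)) a)) (RtoC (IZR a0))) (ev a q s).
Proof.
  intros H. unfold fmul.
  rewrite ev_add, ev_add, !ev_scal.
  rewrite ev_sh, ev_sh, ev_sh.
  replace (S (S s)) with (2 + s)%nat by lia. rewrite ev_pad by auto.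
  replace (S s) with (1 + s)%nat by lia. rewrite ev_pad by auto.
  ring.
Qed.

Lemma no_common_prime a0 a1 a2 : Z.gcd (Z.gcd a0 a1) a2 = 1%Z ->
  ~ (exists p, prime p /\ (p | a0) /\ (p | a1) /\ (p | a2))%Z.
Proof.
  intros G [p [Hp [A [B C]]]].
  assert (D : (p | 1)%Z). { rewrite <- G. apply Z.gcd_greatest; auto. apply Z.gcd_greatest; auto. }
  destruct Hp as [Hp _]. apply Z.divide_pos_le in D; lia.
Qed.

Lemma gauss a a0 a1 a2 : snd a <> 0 -> Z.gcd (Z.gcd a0 a1) a2 = 1%Z -> (a2 > 0)%Z ->
  Cplus (Cplus (Cmult (RtoC (IZR a2)) (Cmult a a)) (Cmult (RtoC (IZR a1)) a)) (RtoC (IZR a0)) = RtoC 0 ->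
  forall n g, (forall k, (n <= k)%nat -> g k = 0%Z) -> ev a g n = RtoC 0 -> (a0 | g 0%nat)%Z.
Proof.
  intros Ha G Ha2 Hf n g Hg Hev.
  destruct (pdiv a0 a1 a2 ltac:(lia) n g Hg) as [M [q [r0 [r1 [HM [Hq HE]]]]]].
  set (r := fun k : nat => ((if Nat.eqb k 0 then r0 else 0) + (if Nat.eqb k 1 then r1 else 0))%Z).
  assert (E1 : ev a (fun k => (M * g k)%Z) (S (S n)) = Cplus (ev a (fmul a0 a1 a2 q) (S (S n))) (ev a r (S (S n)))).
  { rewrite <- ev_add. apply ev_ext. intros k. rewrite HE. unfold r. ring. }
  rewrite ev_scal, ev_fmul in E1 by auto. rewrite Hf in E1.
  replace (S (S n)) with (2 + n)%nat in E1 by lia. rewrite ev_pad in E1 by auto. rewrite Hev in E1.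
  replace (2 + n)%nat with (n + 2)%nat in E1 by lia. rewrite ev_pad in E1.
  2:{ intros k Hk. unfold r. destruct (Nat.eqb_spec k 0); destruct (Nat.eqb_spec k 1); lia. }
  unfold ev, r in E1. simpl in E1.
  assert (E2 : RtoC 0 = Cplus (RtoC (IZR r0)) (Cmult (RtoC (IZR r1)) a)).
  { transitivity (Cmult (RtoC (IZR M)) (RtoC 0)). ring. rewrite E1. rewrite Z.add_0_r. ring. }
  apply (f_equal snd) in E2 as E3. simpl in E3.
  assert (Hr1 : IZR r1 = 0) by nra. apply eq_IZR in Hr1.
  apply (f_equal fst) in E2. simpl in E2. subst r1.
  assert (Hr0 : IZR r0 = 0) by (simpl in E2; lra). apply eq_IZR in Hr0. subst r0.
  assert (Hdiv : forall k, (M | q k)%Z).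
  { apply (content_lemma a0 a1 a2 (no_common_prime _ _ _ G) (Z.to_nat M) M q HM (le_n _)).
    intros k. specialize (HE k). exists (g k). rewrite Z.mul_comm. rewrite HE.
    destruct (k =? 0)%nat, (k =? 1)%nat; ring. }
  specialize (HE 0%nat). unfold fmul, sh in HE. simpl in HE.
  destruct (Hdiv 0%nat) as [h Hh]. rewrite Hh in HE. exists h. nia.
Qed.


Definition inS (a : C) (a2 : Z) (x : C) : Prop :=
  exists u v : Z, x = Cplus (RtoC (IZR u)) (Cmult (RtoC (IZR (v * a2))) a).

Lemma ev_mono0 a n : ev a (mono 0) (S n) = RtoC 1.
Proof. replace (S n) with (n + 1)%nat by lia. rewrite ev_pad.
  unfold ev, mono. simpl. apply injective_projections; simpl; ring.
  intros k Hk. unfold mono. destruct (Nat.eqb_spec k 0); lia. Qed.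

Lemma trunc a c n : exists c', (forall k, (n <= k)%nat -> c' k = 0%Z) /\ ev a c' n = ev a c n.
Proof. exists (fun k => if Nat.ltb k n then c k else 0%Z). split.
  intros k Hk. destruct (Nat.ltb_spec k n); auto; lia.
  unfold ev. apply csum_ext. intros j Hj. destruct (Nat.ltb_spec j n); auto; lia. Qed.

Lemma Zal_mul a x : in_Z_alpha a x -> in_Z_alpha a (Cmult a x).
Proof. intros [n [c E]]. exists (S n), (sh c). change (Cmult a x = ev a (sh c) (S n)).
  rewrite ev_sh. rewrite E. reflexivity. Qed.

Lemma Zal_addint a x z : in_Z_alpha a x -> in_Z_alpha a (Cplus x (RtoC (IZR z))).
Proof. intros [n [c E]]. destruct (trunc a c n) as [c' [H1 H2]].
  exists (1 + n)%nat, (fun k => (c' k + z * mono 0 k)%Z).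
  change (Cplus x (RtoC (IZR z)) = ev a (fun k => (c' k + z * mono 0 k)%Z) (1 + n)).
  rewrite ev_add, ev_scal, ev_pad by auto. rewrite ev_mono0, H2. rewrite E. unfold ev. ring. Qed.

Lemma a_nonzero a : snd a <> 0 -> a <> RtoC 0.
Proof. intros H E. apply H. rewrite E. reflexivity. Qed.

Lemma Cmult_cancel a z : a <> RtoC 0 -> Cmult a z = RtoC 0 -> z = RtoC 0.
Proof. intros Ha E. replace z with (Cmult (Cinv a) (Cmult a z)). rewrite E. ring.
  rewrite Cmult_assoc, Cinv_l by auto. ring. Qed.



Lemma lemB a a0 a1 a2 : snd a <> 0 -> Z.gcd (Z.gcd a0 a1) a2 = 1%Z -> (a2 > 0)%Z ->
  Cplus (Cplus (Cmult (RtoC (IZR a2)) (Cmult a a)) (Cmult (RtoC (IZR a1)) a)) (RtoC (IZR a0)) = RtoC 0 ->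
  forall y e, in_Z_alpha a y -> Cmult a y = RtoC (IZR e) -> (a0 | e)%Z.
Proof.
  intros Ha G Ha2 Hf y e [n [c E]] Hy.
  destruct (trunc a c n) as [c' [H1 H2]].
  set (g := fun k => ((-e) * mono 0 k + sh c' k)%Z).
  assert (Hg : ev a g (S n) = RtoC 0).
  { unfold g. rewrite ev_add, ev_scal, ev_mono0, ev_sh, H2.
    change (csum (fun j : nat => Cmult (RtoC (IZR (c j))) (Cpown a j)) n) with (ev a c n) in E.
    rewrite <- E, Hy. rewrite opp_IZR, RtoC_opp. ring. }
  assert (D : (a0 | g 0%nat)%Z).
  { apply (gauss a a0 a1 a2 Ha G Ha2 Hf (S n) g); auto.
    intros k Hk. unfold g, mono, sh. destruct k as [|k]. lia. rewrite H1 by lia.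
    destruct (Nat.eqb_spec (S k) 0); lia. }
  unfold g, mono, sh in D. simpl in D. rewrite Z.add_0_r, Z.mul_1_r in D.
  apply Z.divide_opp_r in D. rewrite Z.opp_involutive in D. auto.
Qed.

Lemma lemB' a a0 a1 a2 : snd a <> 0 -> Z.gcd (Z.gcd a0 a1) a2 = 1%Z -> (a2 > 0)%Z ->
  Cplus (Cplus (Cmult (RtoC (IZR a2)) (Cmult a a)) (Cmult (RtoC (IZR a1)) a)) (RtoC (IZR a0)) = RtoC 0 ->
  forall y e, in_Z_alpha a y -> Cmult a y = RtoC (IZR e) -> inS a a2 y.
Proof.
  intros Ha G Ha2 Hf y e Hy E.
  destruct (lemB a a0 a1 a2 Ha G Ha2 Hf y e Hy E) as [t Ht].
  exists (- t * a1)%Z, (- t)%Z.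
  assert (Cmult a (Cplus y (Cmult (RtoC (IZR t)) (Cplus (RtoC (IZR a1)) (Cmult (RtoC (IZR a2)) a)))) = RtoC 0).
  { transitivity (Cplus (Cmult a y) (Cmult (RtoC (IZR t)) (Cplus (Cplus (Cmult (RtoC (IZR a2)) (Cmult a a)) (Cmult (RtoC (IZR a1)) a)) (RtoC (IZR a0)))) - Cmult (RtoC (IZR t)) (RtoC (IZR a0)))%C.
    ring. rewrite Hf, E, Ht, mult_IZR, RtoC_mult. ring. }
  apply Cmult_cancel in H. 2: apply a_nonzero; auto.
  rewrite !mult_IZR, !opp_IZR, !RtoC_mult, !RtoC_opp.
  transitivity (Cplus y (Cmult (RtoC (IZR t)) (Cplus (RtoC (IZR a1)) (Cmult (RtoC (IZR a2)) a))) - Cmult (RtoC (IZR t)) (Cplus (RtoC (IZR a1)) (Cmult (RtoC (IZR a2)) a)))%C.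
  ring. rewrite H. ring.
Qed.

Lemma lemA a a0 a1 a2 : snd a <> 0 -> Z.gcd (Z.gcd a0 a1) a2 = 1%Z -> (a2 > 0)%Z ->
  Cplus (Cplus (Cmult (RtoC (IZR a2)) (Cmult a a)) (Cmult (RtoC (IZR a1)) a)) (RtoC (IZR a0)) = RtoC 0 ->
  forall x, in_Lambda a x -> inS a a2 x.
Proof.
  intros Ha G Ha2 Hf x [Hx [m [e Ex]]]. revert x e Hx Ex. induction m; intros x e Hx Ex.
  - exists 0%Z, 0%Z. rewrite Ex. simpl. apply injective_projections; simpl; ring.
  - rewrite csum_front in Ex.
    set (x' := csum (fun j => Cmult (RtoC (IZR (e (S j)))) (Cpown (Cinv a) (S j))) m).
    assert (Ex2 : x = Cmult (Cinv a) (Cplus (RtoC (IZR (e 0%nat))) x')).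
    { rewrite Ex. unfold x'. rewrite Cmult_plus_distr_l. f_equal. simpl. ring.
      rewrite <- csum_scal. apply csum_ext. intros j _. simpl. ring. }
    assert (Hax : Cmult a x = Cplus (RtoC (IZR (e 0%nat))) x').
    { rewrite Ex2. rewrite Cmult_assoc, Cinv_r by (apply a_nonzero; auto). ring. }
    assert (Hx' : in_Z_alpha a x').
    { replace x' with (Cplus (Cmult a x) (RtoC (IZR (- e 0%nat)))).
      apply Zal_addint, Zal_mul, Hx. rewrite Hax, opp_IZR, RtoC_opp. ring. }
    destruct (IHm x' (fun j => e (S j)) Hx' eq_refl) as [u [v Euv]].
    assert (Hy : in_Z_alpha a (Cplus x (RtoC (IZR (- (v * a2)))))) by (apply Zal_addint; auto).
    destruct (lemB' a a0 a1 a2 Ha G Ha2 Hf _ (e 0%nat + u)%Z Hy) as [u' [v' E']].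
    { rewrite Cmult_plus_distr_l, Hax, Euv, plus_IZR, opp_IZR, RtoC_plus, RtoC_opp. ring. }
    exists (u' + v * a2)%Z, v'.
    transitivity (Cplus (Cplus x (RtoC (IZR (- (v * a2))))) (RtoC (IZR (v * a2)))).
    rewrite opp_IZR, RtoC_opp. ring. rewrite E', plus_IZR, RtoC_plus. ring.
Qed.


Lemma tail_step a k d j : (j <= k)%nat ->
  exp_tail a k d j = Cplus (Cmult a (exp_tail a k d (S j))) (RtoC (INR (d j))).
Proof.
  intros Hj. unfold exp_tail. replace (S k - j)%nat with (S (k - j)) by lia.
  replace (S k - S j)%nat with (k - j)%nat by lia.
  rewrite csum_front. rewrite <- csum_scal. rewrite Nat.add_0_r.
  rewrite (Cplus_comm _ (RtoC (INR (d j)))). f_equal. simpl. ring.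
  apply csum_ext. intros i _. rewrite Nat.add_succ_r. simpl. ring.
Qed.

Lemma tail_end a k d : exp_tail a k d (S k) = RtoC 0.
Proof. unfold exp_tail. rewrite Nat.sub_diag. reflexivity. Qed.

Lemma tail_k a k d : exp_tail a k d k = RtoC (INR (d k)).
Proof. rewrite tail_step, tail_end by lia. ring. Qed.

Lemma ln_le' x y : 0 < x -> x <= y -> ln x <= ln y.
Proof. intros H1 H2. destruct (Req_dec x y). subst; lra. left. apply ln_increasing; lra. Qed.

Lemma pigeon n K (f : nat -> nat) : (forall i, (i < n)%nat -> (f i < K)%nat) ->
  (forall i j, (i < n)%nat -> (j < n)%nat -> f i = f j -> i = j) -> (n <= K)%nat.
Proof.
  intros H1 H2.
  assert (ND : NoDup (map f (seq 0 n))).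
  { apply NoDup_map_NoDup_ForallPairs. 2: apply seq_NoDup.
    intros x y Hx Hy E. apply in_seq in Hx, Hy. apply H2; auto; lia. }
  assert (I : incl (map f (seq 0 n)) (seq 0 K)).
  { intros z Hz. apply in_map_iff in Hz. destruct Hz as [x [Ex Hx]]. apply in_seq in Hx.
    apply in_seq. subst. specialize (H1 x). lia. }
  pose proof (NoDup_incl_length ND I). rewrite length_map, !length_seq in H. auto.
Qed.

Lemma mulS a a0 a1 a2 y :
  Cplus (Cplus (Cmult (RtoC (IZR a2)) (Cmult a a)) (Cmult (RtoC (IZR a1)) a)) (RtoC (IZR a0)) = RtoC 0 ->
  inS a a2 y -> exists v B : Z, Cmult a y = Cplus (RtoC (IZR (- (v * a0)))) (Cmult (RtoC (IZR B)) a).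
Proof.
  intros Hf [u [v E]]. exists v, (u - v * a1)%Z. rewrite E.
  transitivity (Cplus (Cplus (RtoC (IZR (- (v * a0)))) (Cmult (RtoC (IZR (u - v * a1))) a))
     (Cmult (RtoC (IZR v)) (Cplus (Cplus (Cmult (RtoC (IZR a2)) (Cmult a a)) (Cmult (RtoC (IZR a1)) a)) (RtoC (IZR a0))))).
  rewrite !opp_IZR, !minus_IZR, !mult_IZR, !RtoC_opp, !RtoC_minus, !RtoC_mult. ring.
  rewrite Hf. ring.
Qed.

Lemma uniq_digit a a0 a1 a2 x y y' (dd dd' : Z) : snd a <> 0 ->
  Cplus (Cplus (Cmult (RtoC (IZR a2)) (Cmult a a)) (Cmult (RtoC (IZR a1)) a)) (RtoC (IZR a0)) = RtoC 0 ->
  inS a a2 y -> inS a a2 y' -> (0 <= dd < a0)%Z -> (0 <= dd' < a0)%Z ->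
  x = Cplus (Cmult a y) (RtoC (IZR dd)) -> x = Cplus (Cmult a y') (RtoC (IZR dd')) -> dd = dd'.
Proof.
  intros Ha Hf Hy Hy' Hd Hd' E E'.
  destruct (mulS a a0 a1 a2 y Hf Hy) as [v [B EB]].
  destruct (mulS a a0 a1 a2 y' Hf Hy') as [v' [B' EB']].
  rewrite EB in E. rewrite EB' in E'. rewrite E in E'.
  pose proof (f_equal snd E') as S1. pose proof (f_equal fst E') as F1. simpl in S1, F1.
  assert (HB : IZR B = IZR B') by (apply (Rmult_eq_reg_r (snd a)); auto; nra).
  rewrite HB in F1. assert (IZR (- (v * a0) + dd) = IZR (- (v' * a0) + dd')).
  { rewrite !plus_IZR. lra. }
  apply eq_IZR in H. assert (Hw : ((v - v') * a0 = dd - dd')%Z) by lia.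
  destruct (Z.lt_trichotomy v v') as [L|[L|L]]; [nia| subst; lia | nia].
Qed.


Lemma nat_ge r : exists n : nat, r <= INR n.
Proof. destruct (INR_archimed 1 r) as [n Hn]. lra. exists n. lra. Qed.

Lemma Cmod_fst x : Rabs (fst x) <= Cmod x.
Proof. pose proof (Rmax_Cmod x). pose proof (Rmax_l (Rabs (fst x)) (Rabs (snd x))). lra. Qed.
Lemma Cmod_snd x : Rabs (snd x) <= Cmod x.
Proof. pose proof (Rmax_Cmod x). pose proof (Rmax_r (Rabs (fst x)) (Rabs (snd x))). lra. Qed.

Lemma alpha_facts (alpha : C) (a0 a1 a2 : Z) : snd alpha <> 0 -> Cmod alpha > 1 -> (a2 > 0)%Z ->
  Cplus (Cplus (Cmult (RtoC (IZR a2)) (Cmult alpha alpha)) (Cmult (RtoC (IZR a1)) alpha))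
        (RtoC (IZR a0)) = RtoC 0 -> IZR a0 = IZR a2 * (Cmod alpha) ^ 2 /\ 1 < IZR a0.
Proof.
  intros Hs Hm Ha2 Hf.
  pose proof (f_equal fst Hf) as F. pose proof (f_equal snd Hf) as S. simpl in F, S.
  assert (A1 : IZR a1 = -2 * IZR a2 * fst alpha).
  { apply (Rmult_eq_reg_r (snd alpha)); auto. nra. }
  assert (Cm : Cmod alpha ^ 2 = fst alpha ^ 2 + snd alpha ^ 2).
  { unfold Cmod. rewrite pow2_sqrt. auto. nra. }
  assert (IZR a2 >= 1). { apply IZR_ge. lia. }
  assert (IZR a0 = IZR a2 * (Cmod alpha) ^ 2) by (rewrite Cm; nra). split; auto. rewrite H0. nra.
Qed.

Theorem mainTheorem8 (alpha : C) (a0 a1 a2 : Z) :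
  in_Qi alpha -> snd alpha <> 0 -> Cmod alpha > 1 ->
  Z.gcd (Z.gcd a0 a1) a2 = 1%Z -> (a2 > 0)%Z ->
  Cplus (Cplus (Cmult (RtoC (IZR a2)) (Cmult alpha alpha)) (Cmult (RtoC (IZR a1)) alpha))
        (RtoC (IZR a0)) = RtoC 0 ->
  exists Cst : R, forall (N : C) (k : nat) (d : nat -> nat),
    in_Lambda alpha N -> N <> RtoC 0 ->
    is_int_alpha_expansion alpha a0 N k d ->
    Rabs (INR k - ln (Cmod N) / ln (Cmod alpha)) <= Cst.
Proof.
  intros _ Hs Hm G Ha2 Hf.
  destruct (alpha_facts alpha a0 a1 a2 Hs Hm Ha2 Hf) as [Ha0 Ha0g].
  assert (Ha0pos : (0 < a0)%Z) by (apply lt_IZR; lra).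
  assert (Ha2r : 1 <= IZR a2) by (apply IZR_le; lia).
  set (rho := Cmod alpha) in *.
  set (c := IZR a0 / (rho - 1)).
  assert (Hc : 0 < c) by (unfold c; apply Rdiv_lt_0_compat; lra).
  assert (Hcid : IZR a0 + c = rho * c) by (unfold c; field; lra).
  set (R0 := 2 * c + 1).
  set (p := fst alpha). set (s := snd alpha).
  assert (Hsa : 0 < Rabs s) by (apply Rabs_pos_lt; auto).
  destruct (nat_ge (R0 / Rabs s)) as [Vb HVb].
  destruct (nat_ge (R0 + INR Vb * IZR a2 * Rabs p)) as [Ub HUb].
  set (K := ((2 * Ub + 1) * (2 * Vb + 1))%nat).
  set (delta := Rmin 1 (Rabs s)).
  assert (Hdel : 0 < delta /\ delta <= 1 /\ delta <= Rabs s).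
  { unfold delta. split. apply Rmin_glb_lt; lra. split. apply Rmin_l. apply Rmin_r. }
  set (L := ln rho).
  assert (HL : 0 < L) by (unfold L; rewrite <- ln_1; apply ln_increasing; lra).
  exists (Rmax (INR K - ln delta / L) (ln c / L + 1)).
  intros N k d HN HN0 [Hd [Hdk [HNe HL2]]].
  set (Nt := exp_tail alpha k d).
  assert (HS : forall j, (j <= S k)%nat -> inS alpha a2 (Nt j)).
  { intros j Hj. apply (lemA alpha a0 a1 a2 Hs G Ha2 Hf). apply HL2; auto. }
  assert (Hst : forall j, (j <= k)%nat -> Nt j = Cplus (Cmult alpha (Nt (S j))) (RtoC (IZR (Z.of_nat (d j))))).
  { intros j Hj. unfold Nt. rewrite <- INR_IZR_INZ. apply tail_step; auto. }
  assert (Hdr : forall j, (j <= k)%nat -> 0 <= IZR (Z.of_nat (d j)) <= IZR a0).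
  { intros j Hj. specialize (Hd j Hj). split; apply IZR_le; lia. }
  assert (Hda : forall j, (j <= k)%nat -> Cmod (RtoC (IZR (Z.of_nat (d j)))) <= IZR a0).
  { intros j Hj. rewrite Cmod_R. rewrite Rabs_pos_eq; apply Hdr; auto. }
  assert (Hup1 : forall j, (j <= k)%nat -> Cmod (Nt j) <= rho * Cmod (Nt (S j)) + IZR a0).
  { intros j Hj. rewrite Hst by auto. eapply Rle_trans. apply Cmod_triangle.
    rewrite Cmod_mult. specialize (Hda j Hj). unfold rho. lra. }
  assert (Hlo1 : forall j, (j <= k)%nat -> rho * Cmod (Nt (S j)) - IZR a0 <= Cmod (Nt j)).
  { intros j Hj. rewrite (Hst j Hj). 
    pose proof (Cmod_triangle (Cplus (Cmult alpha (Nt (S j))) (RtoC (IZR (Z.of_nat (d j))))) (Copp (RtoC (IZR (Z.of_nat (d j)))))) as T.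
    replace (Cplus (Cplus (Cmult alpha (Nt (S j))) (RtoC (IZR (Z.of_nat (d j))))) (Copp (RtoC (IZR (Z.of_nat (d j)))))) with (Cmult alpha (Nt (S j))) in T by ring.
    rewrite Cmod_mult, Cmod_opp in T. specialize (Hda j Hj). unfold rho. lra. }
  assert (HNt0 : Nt 0%nat = N) by (symmetry; auto).
  assert (Hend : Nt (S k) = RtoC 0) by apply tail_end.
  assert (Hup : forall t, (t <= S k)%nat -> Cmod N + c <= rho ^ t * (Cmod (Nt t) + c)).
  { induction t; intros Ht. rewrite <- HNt0. simpl. lra.
    eapply Rle_trans. apply IHt. lia. simpl.
    specialize (Hup1 t ltac:(lia)). assert (0 < rho ^ t) by (apply pow_lt; lra).
    replace (rho * rho ^ t * (Cmod (Nt (S t)) + c)) with (rho ^ t * (rho * (Cmod (Nt (S t)) + c))) by ring.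
    apply Rmult_le_compat_l. lra. nra. }
  assert (Hlo : forall t, (t <= S k)%nat -> rho ^ t * (Cmod (Nt t) - c) <= Cmod N - c).
  { induction t; intros Ht. rewrite <- HNt0. simpl. lra.
    eapply Rle_trans. 2: apply IHt; lia. simpl.
    specialize (Hlo1 t ltac:(lia)). assert (0 < rho ^ t) by (apply pow_lt; lra).
    replace (rho * rho ^ t * (Cmod (Nt (S t)) - c)) with (rho ^ t * (rho * (Cmod (Nt (S t)) - c))) by ring.
    apply Rmult_le_compat_l. lra. nra. }
  assert (Hanz : alpha <> RtoC 0) by (apply a_nonzero; auto).
  assert (S0 : inS alpha a2 (RtoC 0)).
  { exists 0%Z, 0%Z. apply injective_projections; simpl; ring. }
  assert (Hdig : forall j, (j <= k)%nat -> (0 <= Z.of_nat (d j) < a0)%Z).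
  { intros j Hj. specialize (Hd j Hj). lia. }
  assert (Zstep : forall j, (j <= k)%nat -> Nt j = RtoC 0 -> Nt (S j) = RtoC 0).
  { intros j Hj E.
    assert (Ed : Z.of_nat (d j) = 0%Z).
    { apply (uniq_digit alpha a0 a1 a2 (Nt j) (Nt (S j)) (RtoC 0) _ 0%Z Hs Hf); auto.
      apply HS; lia. lia. rewrite E. ring. }
    pose proof (Hst j Hj) as E2. rewrite Ed, E in E2.
    apply (Cmult_cancel alpha); auto. rewrite E2. ring. }
  assert (Z0 : forall j, (j <= k)%nat -> Nt j <> RtoC 0).
  { intros j Hj E.
    assert (forall t, (j + t <= k)%nat -> Nt (j + t)%nat = RtoC 0).
    { induction t; intros Ht. rewrite Nat.add_0_r; auto.
      rewrite Nat.add_succ_r. apply Zstep. lia. apply IHt. lia. }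
    specialize (H (k - j)%nat ltac:(lia)). replace (j + (k - j))%nat with k in H by lia.
    unfold Nt in H. rewrite tail_k in H. apply Hdk. apply INR_eq. simpl.
    apply (f_equal fst) in H. simpl in H. auto. }
  assert (Dist : forall a b, (a < b)%nat -> (b <= k)%nat -> Nt a <> Nt b).
  { intros a b Hab Hb E.
    assert (forall t, (b + t <= S k)%nat -> Nt (a + t)%nat = Nt (b + t)%nat).
    { induction t; intros Ht. rewrite !Nat.add_0_r; auto.
      rewrite !Nat.add_succ_r. specialize (IHt ltac:(lia)).
      assert (Ed : Z.of_nat (d (a + t)%nat) = Z.of_nat (d (b + t)%nat)).
      { apply (uniq_digit alpha a0 a1 a2 (Nt (a + t)%nat) (Nt (S (a + t))) (Nt (S (b + t))) _ _ Hs Hf).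
        apply HS; lia. apply HS; lia. apply Hdig; lia. apply Hdig; lia.
        apply Hst; lia. rewrite IHt. apply Hst; lia. }
      pose proof (Hst (a + t)%nat ltac:(lia)) as E1. pose proof (Hst (b + t)%nat ltac:(lia)) as E2.
      rewrite IHt, Ed in E1. rewrite E1 in E2.
      assert (Dz : Cplus (Nt (S (a + t))) (Copp (Nt (S (b + t)))) = RtoC 0).
      { apply (Cmult_cancel alpha); auto.
        transitivity (Cplus (Cplus (Cmult alpha (Nt (S (a + t)))) (RtoC (IZR (Z.of_nat (d (b + t)%nat))))) (Copp (Cplus (Cmult alpha (Nt (S (b + t)))) (RtoC (IZR (Z.of_nat (d (b + t)%nat))))))). ring.
        rewrite <- E2. ring. }
      transitivity (Cplus (Cplus (Nt (S (a + t))) (Copp (Nt (S (b + t))))) (Nt (S (b + t)))). ring.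
      rewrite Dz. ring. }
    specialize (H (S k - b)%nat ltac:(lia)). replace (b + (S k - b))%nat with (S k) in H by lia.
    rewrite Hend in H. apply (Z0 (a + (S k - b))%nat). lia. auto. }
  assert (Hcomp : forall u v : Z, fst (Cplus (RtoC (IZR u)) (Cmult (RtoC (IZR (v * a2))) alpha)) = IZR u + IZR v * IZR a2 * p
      /\ snd (Cplus (RtoC (IZR u)) (Cmult (RtoC (IZR (v * a2))) alpha)) = IZR v * IZR a2 * s).
  { intros u v. unfold p, s. simpl. rewrite mult_IZR. split; ring. }
  assert (Box : forall x (u v : Z), x = Cplus (RtoC (IZR u)) (Cmult (RtoC (IZR (v * a2))) alpha) ->
      Cmod x <= R0 -> (Z.abs v <= Z.of_nat Vb)%Z /\ (Z.abs u <= Z.of_nat Ub)%Z).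
  { intros x u v E Hx. destruct (Hcomp u v) as [F S].
    pose proof (Cmod_fst x) as Fx. pose proof (Cmod_snd x) as Sx. rewrite E in Fx, Sx.
    rewrite F in Fx. rewrite S in Sx. rewrite <- E in Fx, Sx.
    rewrite !Rabs_mult in Sx. rewrite (Rabs_pos_eq (IZR a2)) in Sx by lra.
    assert (Hv : Rabs (IZR v) <= INR Vb).
    { eapply Rle_trans. 2: apply HVb. apply (Rmult_le_reg_r (Rabs s)); auto. unfold Rdiv.
      rewrite Rmult_assoc, Rinv_l, Rmult_1_r by lra.
      pose proof (Rabs_pos (IZR v)). assert (0 <= Rabs (IZR v) * Rabs s * (IZR a2 - 1)) by (apply Rmult_le_pos; [apply Rmult_le_pos|]; lra). lra. }
    split. apply le_IZR. rewrite abs_IZR, <- INR_IZR_INZ. auto.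
    apply le_IZR. rewrite abs_IZR, <- INR_IZR_INZ.
    eapply Rle_trans. 2: apply HUb.
    replace (IZR u) with ((IZR u + IZR v * IZR a2 * p) - IZR v * IZR a2 * p) by ring.
    eapply Rle_trans. apply Rabs_triang. rewrite Rabs_Ropp, !Rabs_mult, (Rabs_pos_eq (IZR a2)) by lra.
    pose proof (Rabs_pos p). assert (0 <= (INR Vb - Rabs (IZR v)) * (IZR a2 * Rabs p)) by (apply Rmult_le_pos; [lra | apply Rmult_le_pos; lra]). lra. }
  assert (NZ : forall x (u v : Z), x = Cplus (RtoC (IZR u)) (Cmult (RtoC (IZR (v * a2))) alpha) ->
      x <> RtoC 0 -> delta <= Cmod x).
  { intros x u v E Hx. destruct (Hcomp u v) as [F S].
    pose proof (Cmod_fst x) as Fx. pose proof (Cmod_snd x) as Sx. rewrite E in Fx, Sx.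
    rewrite F in Fx. rewrite S in Sx. rewrite <- E in Fx, Sx.
    destruct (Z.eq_dec v 0) as [V|V].
    - subst v. assert (u <> 0%Z). { intros U; subst u. apply Hx. rewrite E. apply injective_projections; simpl; ring. }
      replace (IZR u + IZR 0 * IZR a2 * p) with (IZR u) in Fx by (simpl; ring).
      assert (1 <= Rabs (IZR u)). { rewrite <- abs_IZR. apply IZR_le. lia. } lra.
    - rewrite !Rabs_mult, (Rabs_pos_eq (IZR a2)) in Sx by lra.
      assert (1 <= Rabs (IZR v)). { rewrite <- abs_IZR. apply IZR_le. lia. }
      pose proof (Rabs_pos s). assert (0 <= (Rabs (IZR v) * IZR a2 - 1) * Rabs s) by (apply Rmult_le_pos; nra). lra. }
  assert (HNd : delta <= Cmod N).
  { destruct (HS 0%nat ltac:(lia)) as [u [v E]]. rewrite HNt0 in E. eapply NZ; eauto. }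
  assert (Hrho1 : 1 <= rho) by lra.
  assert (HrK : 0 < rho ^ K) by (apply pow_lt; lra).
  assert (Hlow : delta * rho ^ k / rho ^ K <= Cmod N).
  { destruct (le_lt_dec K k) as [HK|HK].
    - assert (Hmain : rho ^ (k - K) <= Cmod N).
      { destruct (Rle_or_lt (rho ^ (k - K)) (Cmod N)) as [H|H]; auto. exfalso.
        assert (InBox : forall j, (k - K <= j)%nat -> (j <= k)%nat -> Cmod (Nt j) <= R0).
        { intros j H1 H2. destruct (Rle_or_lt (Cmod (Nt j)) R0) as [H3|H3]; auto. exfalso.
          specialize (Hlo j ltac:(lia)). pose proof (Rle_pow rho (k - K) j Hrho1 H1).
          assert (1 <= Cmod (Nt j) - c) by (unfold R0 in H3; lra).
          assert (rho ^ j <= rho ^ j * (Cmod (Nt j) - c)).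
          { pose proof (pow_lt rho j ltac:(lra)). nra. }
          lra. }
        assert (Hch : forall j, {uv : Z * Z | (j <= S k)%nat -> Nt j = Cplus (RtoC (IZR (fst uv))) (Cmult (RtoC (IZR (snd uv * a2))) alpha)}).
        { intros j. apply constructive_indefinite_description.
          destruct (le_dec j (S k)) as [l|l].
          - destruct (HS j l) as [u [v E]]. exists (u, v). auto.
          - exists (0%Z, 0%Z). intros; lia. }
        set (cu := fun j => fst (proj1_sig (Hch j))).
        set (cv := fun j => snd (proj1_sig (Hch j))).
        assert (Hcuv : forall j, (j <= S k)%nat -> Nt j = Cplus (RtoC (IZR (cu j))) (Cmult (RtoC (IZR (cv j * a2))) alpha)).
        { intros j Hj. unfold cu, cv. destruct (Hch j) as [uv Huv]. simpl. auto. }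
        set (code := fun j => ((cu j + Z.of_nat Ub) * (2 * Z.of_nat Vb + 1) + (cv j + Z.of_nat Vb))%Z).
        assert (Hb : forall j, (k - K <= j)%nat -> (j <= k)%nat -> (Z.abs (cv j) <= Z.of_nat Vb)%Z /\ (Z.abs (cu j) <= Z.of_nat Ub)%Z).
        { intros j H1 H2. apply (Box (Nt j)). apply Hcuv; lia. apply InBox; auto. }
        assert (Hpg : (S K <= K)%nat).
        { apply (pigeon (S K) K (fun i => Z.to_nat (code (k - K + i)%nat))).
          - intros i Hi. destruct (Hb (k - K + i)%nat ltac:(lia) ltac:(lia)) as [B1 B2].
            unfold code. set (u1 := cu (k - K + i)%nat) in *. set (v1 := cv (k - K + i)%nat) in *.
            clearbody u1 v1.
            assert (HKz : Z.of_nat K = ((2 * Z.of_nat Ub + 1) * (2 * Z.of_nat Vb + 1))%Z) by (unfold K; lia).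
            assert (0 <= (2 * Z.of_nat Ub - (u1 + Z.of_nat Ub)) * (2 * Z.of_nat Vb + 1))%Z by (apply Z.mul_nonneg_nonneg; lia).
            assert (0 <= (u1 + Z.of_nat Ub) * (2 * Z.of_nat Vb + 1))%Z by (apply Z.mul_nonneg_nonneg; lia).
            lia.
          - intros i i' Hi Hi' E.
            destruct (Hb (k - K + i)%nat ltac:(lia) ltac:(lia)) as [B1 B2].
            destruct (Hb (k - K + i')%nat ltac:(lia) ltac:(lia)) as [B1' B2'].
            assert (Ec : code (k - K + i)%nat = code (k - K + i')%nat).
            { unfold code in *. apply Z2Nat.inj in E; nia. }
            unfold code in Ec.
            assert (Eu : cu (k - K + i)%nat = cu (k - K + i')%nat /\ cv (k - K + i)%nat = cv (k - K + i')%nat).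
            { set (u1 := cu (k - K + i)%nat) in *. set (u2 := cu (k - K + i')%nat) in *.
              set (v1 := cv (k - K + i)%nat) in *. set (v2 := cv (k - K + i')%nat) in *.
              assert (Hw : ((u1 - u2) * (2 * Z.of_nat Vb + 1) = v2 - v1)%Z) by lia.
              destruct (Z.lt_trichotomy u1 u2) as [Q|[Q|Q]]; [nia | subst; lia | nia]. }
            destruct Eu as [Eu Ev].
            assert (EN : Nt (k - K + i)%nat = Nt (k - K + i')%nat).
            { rewrite (Hcuv (k - K + i)%nat), (Hcuv (k - K + i')%nat) by lia. rewrite Eu, Ev. auto. }
            destruct (Nat.lt_trichotomy i i') as [Q|[Q|Q]]; auto.
            + exfalso. apply (Dist (k - K + i)%nat (k - K + i')%nat); auto; lia.
            + exfalso. apply (Dist (k - K + i')%nat (k - K + i)%nat); auto; lia. }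
        lia. }
      replace (rho ^ k) with (rho ^ (k - K) * rho ^ K) by (rewrite <- pow_add; f_equal; lia).
      replace (delta * (rho ^ (k - K) * rho ^ K) / rho ^ K) with (delta * rho ^ (k - K)) by (field; lra).
      pose proof (pow_lt rho (k - K) ltac:(lra)). nra.
    - pose proof (Rle_pow rho k K Hrho1 ltac:(lia)). pose proof (pow_lt rho k ltac:(lra)).
      assert (rho ^ k / rho ^ K <= 1). { apply (Rmult_le_reg_r (rho ^ K)); auto. field_simplify; lra. }
      assert (delta * (rho ^ k / rho ^ K) <= delta) by nra. unfold Rdiv in *. lra. }
  assert (HNpos : 0 < Cmod N) by (apply Cmod_gt_0; auto).
  assert (Hupp : Cmod N <= c * rho ^ (S k)).
  { specialize (Hup (S k) (le_n _)). rewrite Hend, Cmod_0 in Hup. lra. }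
  assert (Hd0 : 0 < delta) by apply Hdel.
  assert (Hrk : 0 < rho ^ k) by (apply pow_lt; lra).
  assert (Lo : ln delta + INR k * L - INR K * L <= ln (Cmod N)).
  { assert (Hpos : 0 < delta * rho ^ k / rho ^ K) by (unfold Rdiv; apply Rmult_lt_0_compat; [apply Rmult_lt_0_compat|apply Rinv_0_lt_compat]; lra).
    eapply Rle_trans. 2: apply (ln_le' _ _ Hpos Hlow).
    unfold Rdiv, L. rewrite ln_mult, ln_mult, ln_Rinv, !ln_pow.
    all: try lra. all: repeat (apply Rmult_lt_0_compat || apply Rinv_0_lt_compat); lra. }
  assert (Up : ln (Cmod N) <= ln c + (INR k + 1) * L).
  { eapply Rle_trans. apply (ln_le' _ _ HNpos Hupp).
    unfold L. rewrite ln_mult, ln_pow, S_INR; try lra. apply pow_lt; lra. }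
  apply Rabs_le. split.
  - apply Rle_trans with (- (ln c / L + 1)). apply Ropp_le_contravar, Rmax_r.
    assert (E : INR k - ln (Cmod N) / L + (ln c / L + 1) = (ln c + (INR k + 1) * L - ln (Cmod N)) / L) by (field; lra).
    assert (0 <= (ln c + (INR k + 1) * L - ln (Cmod N)) / L) by (apply Rdiv_le_0_compat; lra).
    lra.
  - apply Rle_trans with (INR K - ln delta / L). 2: apply Rmax_l.
    assert (E : INR K - ln delta / L - (INR k - ln (Cmod N) / L) = (ln (Cmod N) - (ln delta + INR k * L - INR K * L)) / L) by (field; lra).
    assert (0 <= (ln (Cmod N) - (ln delta + INR k * L - INR K * L)) / L) by (apply Rdiv_le_0_compat; lra).
    lra.
Qed.
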